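(* Let $k$ be an algebraically closed field and let $A$ be a primitive just infinite $k$-algebra which does not satisfy a polynomial identity. If $A$ satisfies the Nullstellensatz, then $A$ is stably just infinite.
   Context: All rings are associative unital algebras over a field. A $k$-algebra $A$ is called just infinite if $\dim_k(A)=\infty$ and every nonzero two-sided ideal of $A$ has finite codimension in $A$. A just infinite $k$-algebra $A$ is stably just infinite if $A\otimes_k K$ is just infinite over $K$ for every field extension $K/k$. A $k$-algebra $A$ satisfies the Nullstellensatz if every prime ideal of $A$ is an intersection of primitive ideals and, for every simple $A$-module $M$, the division ring $\operatorname{End}_A(M)$ is algebraic over $k$. *)

(* Defs.v *)
From HB Require Import structures.
From mathcomp Require Import all_boot all_algebra.
Set Implicit Arguments. Unset Strict Implicit. Unset Printing Implicit Defensive.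
Import GRing.Theory.
Local Open Scope ring_scope.

(* Algebras over a field F are modelled as [algType F] (associative, unital,
   scalars central).  Subsets / ideals are predicates [A -> Prop]. *)

Section AlgDefs.
Variables (F : fieldType) (A : algType F).

Definition in_span (s : seq A) (a : A) : Prop :=
  exists c : nat -> F, a = \sum_(i < size s) c i *: s`_i.

Definition infinite_dim : Prop := ~ exists s : seq A, forall a, in_span s a.

Definition two_sided_ideal (I : A -> Prop) : Prop :=
  [/\ I 0, (forall x y, I x -> I y -> I (x - y)),
      (forall a x, I x -> I (a * x)) & (forall a x, I x -> I (x * a))].

Definition finite_codim (I : A -> Prop) : Prop :=
  exists s : seq A, forall a, exists c : nat -> F,
    I (a - \sum_(i < size s) c i *: s`_i).

Definition just_infinite : Prop :=
  infinite_dim /\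
  forall I, two_sided_ideal I -> (exists x, I x /\ x != 0) -> finite_codim I.

Definition submodule (M : lmodType A) (S : M -> Prop) : Prop :=
  [/\ S 0, (forall m n, S m -> S n -> S (m - n)) & (forall (a : A) m, S m -> S (a *: m))].

Definition simple_module (M : lmodType A) : Prop :=
  (exists m : M, m != 0) /\
  forall S : M -> Prop, submodule S -> (forall m, S m -> m = 0) \/ (forall m, S m).

Definition faithful_module (M : lmodType A) : Prop :=
  forall a : A, (forall m : M, a *: m = 0) -> a = 0.

Definition primitive_algebra : Prop :=
  exists M : lmodType A, simple_module M /\ faithful_module M.

Definition annihilator (M : lmodType A) (a : A) : Prop := forall m : M, a *: m = 0.

Definition primitive_ideal (P : A -> Prop) : Prop :=
  exists M : lmodType A, simple_module M /\ forall a, P a <-> annihilator M a.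

Definition prime_ideal (P : A -> Prop) : Prop :=
  [/\ two_sided_ideal P, (exists a, ~ P a) &
      forall I J, two_sided_ideal I -> two_sided_ideal J ->
        (forall x y, I x -> J y -> P (x * y)) ->
        (forall x, I x -> P x) \/ (forall y, J y -> P y)].

Definition module_endo (M : lmodType A) (f : M -> M) : Prop :=
  (forall m n, f (m + n) = f m + f n) /\ (forall (a : A) m, f (a *: m) = a *: f m).

Definition algebraic_endo (M : lmodType A) (f : M -> M) : Prop :=
  exists p : {poly F}, p != 0 /\
    forall m : M, \sum_(i < size p) ((p`_i)%:A : A) *: iter i f m = 0.

Definition nullstellensatz : Prop :=
  (forall P, prime_ideal P ->
     exists Fam : (A -> Prop) -> Prop,
       (forall Q, Fam Q -> primitive_ideal Q) /\
       (forall a, P a <-> forall Q, Fam Q -> Q a)) /\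
  (forall M : lmodType A, simple_module M ->
     forall f : M -> M, module_endo f -> algebraic_endo f).

(* A satisfies a polynomial identity: some nonzero element of the free algebra
   F<x_0, x_1, ...> vanishes on A.  A noncommutative polynomial is given by a
   duplicate-free list S of words (seq nat) and a coefficient function c; it is
   nonzero iff some word of S has nonzero coefficient. *)
Definition PI_algebra : Prop :=
  exists (S : seq (seq nat)) (c : seq nat -> F),
    [/\ uniq S, (exists2 w, w \in S & c w != 0) &
        forall x : nat -> A, \sum_(w <- S) c w *: \prod_(i <- w) x i = 0].

End AlgDefs.

Definition lin_indep (F : fieldType) (V : lmodType F) (s : seq V) : Prop :=
  forall c : nat -> F, \sum_(i < size s) c i *: s`_i = 0 ->
    forall i, (i < size s)%N -> c i = 0.

(* B (a K-algebra) together with iota : A -> B is the scalar extension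
   A (x)_k K, where K is a field extension of k via phi : k -> K:
   iota is a ring morphism, semilinear along phi, iota(A) spans B over K,
   and iota maps k-linearly independent families to K-linearly independent
   ones (so iota of a k-basis of A is a K-basis of B). This characterises
   A (x)_k K up to isomorphism of K-algebras. *)
Definition scalar_extension (k K : fieldType) (phi : {rmorphism k -> K})
    (A : algType k) (B : algType K) (iota : {rmorphism A -> B}) : Prop :=
  [/\ (forall (c : k) (a : A), iota (c *: a) = phi c *: iota a),
      (forall b : B, exists s : seq A, in_span (map iota s) b) &
      (forall s : seq A, lin_indep s -> lin_indep (map iota s))].

Definition stably_just_infinite (k : fieldType) (A : algType k) : Prop :=
  just_infinite A /\
  forall (K : fieldType) (phi : {rmorphism k -> K}) (B : algType K)
         (iota : {rmorphism A -> B}),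
    scalar_extension phi iota -> just_infinite B.

(* Main.v *)
Require Import Defs.
From HB Require Import structures.
From mathcomp Require Import all_boot all_algebra.
From Stdlib Require Import Classical IndefiniteDescription.
Set Implicit Arguments. Unset Strict Implicit. Unset Printing Implicit Defensive.
Import GRing.Theory.
Local Open Scope ring_scope.

Lemma sum_remove (V : nmodType) n j (F : nat -> V) : (j < n.+1)%N ->
  \sum_(i < n.+1) F i = F j + \sum_(i < n) F (bump j i).
Proof.
move=> Hj; rewrite (bigD1_ord (Ordinal Hj) (P := xpredT)) //=.
Qed.

Section Endo.
Variables (k : closedFieldType) (A : algType k) (M : lmodType A) (f : M -> M).
Hypotheses (Hs : simple_module M) (He : module_endo f).

Definition ev N (p : {poly k}) m := \sum_(i < N) ((p`_i)%:A : A) *: iter i f m.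

Lemma evE N (p : {poly k}) m : (size p <= N)%N -> ev N p m = ev (size p) p m.
Proof.
move=> H; rewrite /ev -(subnKC H) big_split_ord /= [X in _ + X]big1 ?addr0 // => i _.
by rewrite nth_default ?leq_addr // !scale0r.
Qed.

Lemma f0 : f 0 = 0.
Proof.
case: He => Hadd _; apply: (addrI (f 0)); by rewrite -Hadd !addr0.
Qed.

Lemma fB m n : f (m - n) = f m - f n.
Proof.
case: He => Hadd _.
have fN : f (- n) = - f n.
  by apply: (addrI (f n)); rewrite -Hadd !subrr f0.
by rewrite Hadd fN.
Qed.

Lemma iterB i m n : iter i f (m - n) = iter i f m - iter i f n.
Proof. by elim: i => //= i ->; rewrite fB. Qed.

Lemma iterZ i (a : A) m : iter i f (a *: m) = a *: iter i f m.
Proof. by case: He => _ HZ; elim: i => //= i ->; rewrite HZ. Qed.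

Lemma evBm N (p : {poly k}) m n : ev N p (m - n) = ev N p m - ev N p n.
Proof. by rewrite /ev -sumrB; apply: eq_bigr => i _; rewrite iterB scalerBr. Qed.

Lemma evBp N (p q : {poly k}) m : ev N (p - q) m = ev N p m - ev N q m.
Proof. by rewrite /ev -sumrB; apply: eq_bigr => i _; rewrite coefB scalerBl scalerBl. Qed.

Lemma evMX N (q : {poly k}) m : ev N.+1 (q * 'X) m = ev N q (f m).
Proof.
rewrite /ev big_ord_recl coefMX /= scale0r scale0r add0r.
apply: eq_bigr => i _; rewrite coefMX /=; congr (_ *: _); exact: (iterSr i f m).
Qed.

Lemma evMC N (q : {poly k}) c m : ev N (q * c%:P) m = ev N q (c%:A *: m).
Proof.
rewrite /ev; apply: eq_bigr => i _; rewrite coefMC iterZ scalerA.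
congr (_ *: _); by rewrite -scalerA mulr_algl.
Qed.

Lemma endo_scalar_poly n (p : {poly k}) : (size p <= n)%N -> p != 0 ->
  (forall m, ev (size p) p m = 0) -> exists l : k, forall m, f m = l%:A *: m.
Proof.
elim: n p => [|n IH] p Hsz Hp0 Hev.
  by move: Hp0; rewrite -size_poly_eq0; move: Hsz; rewrite leqn0 => ->.
case: Hs => [[m0 Hm0] Hsimp].
have [Hs1|Hs1] := eqVneq (size p) 1%N.
  exfalso; move: (Hev m0); rewrite Hs1 /ev big_ord1 /= => H.
  have Hc : p`_0 != 0.
    by move: Hp0; rewrite -lead_coef_eq0 lead_coefE Hs1.
  move/eqP: Hm0; apply; rewrite -[m0]scale1r -(scale1r (1 : A)).
  by rewrite -(mulVf Hc) -scalerA -mulr_algl -scalerA H scaler0.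
have /closed_rootP [l Hl] := Hs1.
have /factor_theorem [q Hq] := Hl.
have Hq0 : q != 0 by apply/eqP => Hq0; move: Hp0; rewrite Hq Hq0 mul0r eqxx.
set g := fun m => f m - l%:A *: m.
have Hevg m : ev (size p) p m = ev (size q) q (g m).
  have Hszq : size p = (size q).+1.
    by rewrite Hq size_Mmonic ?monicXsubC // size_XsubC addn2.
  rewrite Hszq {1}Hq mulrBr evBp evMX evMC.
  by rewrite [ev (size q).+1 _ _]evE // -evBm.
have [Hg0|] := classic (forall m, g m = 0).
  exists l => m; move: (Hg0 m); rewrite /g => /eqP; rewrite subr_eq0 => /eqP //.
move=> /not_all_ex_not [m1 Hm1].
have Hsub : submodule (fun m => exists n, m = g n).
  case: He => Hadd HZ.
  split.
  - by exists 0; rewrite /g f0 scaler0 subr0.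
  - move=> _ _ [a ->] [b ->]; exists (a - b); by rewrite /g fB scalerBr !opprD !opprK addrACA.
  - move=> a _ [b ->]; exists (a *: b); rewrite /g HZ scalerBr !scalerA.
    by rewrite mulr_algl mulr_algr.
have Hsurj : forall m, exists n, m = g n.
  case: (Hsimp _ Hsub) => // Hz; exfalso; apply: Hm1; apply: Hz; by exists m1.
apply: (IH q).
- rewrite -ltnS; apply: leq_trans Hsz; idtac.
  by rewrite Hq size_Mmonic ?monicXsubC // size_XsubC addn2.
- exact: Hq0.
- move=> m; case: (Hsurj m) => n1 ->; by rewrite -Hevg.
Qed.

End Endo.

Lemma endo_scalar (k : closedFieldType) (A : algType k) (M : lmodType A) (f : M -> M) :
  simple_module M -> module_endo f -> algebraic_endo f ->
  exists l : k, forall m, f m = l%:A *: m.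
Proof.
move=> Hs He [p [Hp0 Hp]].
by apply: (endo_scalar_poly Hs He (leqnn (size p)) Hp0).
Qed.

Lemma bump_lt j i n : (i < n)%N -> (bump j i < n.+1)%N.
Proof. by rewrite /bump; case: (j <= i)%N => /=; rewrite ?add1n ?add0n // => H; apply: ltnW. Qed.

Lemma unbump_lt j x n : (x < n.+1)%N -> x != j -> (j < n.+1)%N -> (unbump j x < n)%N.
Proof.
rewrite /unbump => Hx Hne Hj; case: (ltngtP j x) => H.
- by rewrite subn1 -ltnS (ltn_predK H).
- by rewrite subn0; apply: leq_trans H Hj.
- by move: Hne; rewrite H eqxx.
Qed.


Section Ext.
Variables (k K : fieldType) (phi : {rmorphism k -> K}) (A : algType k) (B : algType K)
  (iota : {rmorphism A -> B}).
Hypothesis Hext : scalar_extension phi iota.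

Lemma iotaZ c a : iota (c *: a) = phi c *: iota a.
Proof. by case: Hext. Qed.

Lemma nth_map_iota (s : seq A) i : (map iota s)`_i = iota s`_i.
Proof.
elim: s i => [|x s IH] [|i] //=; by rewrite rmorph0.
Qed.

Definition rep n (mu : nat -> K) (a : nat -> A) := \sum_(i < n) mu i *: iota (a i).

Definition kindep n (mu : nat -> K) :=
  forall d : nat -> k, \sum_(i < n) phi (d i) * mu i = 0 -> forall i, (i < n)%N -> d i = 0.

Lemma L_indep n : forall mu w, kindep n mu -> rep n mu w = 0 -> forall i, (i < n)%N -> w i = 0.
Proof.
elim: n => [|n IH] mu w Hk Hr; first by [].
case: (classic (lin_indep (mkseq w n.+1))) => Hli.
  exfalso.
  case: Hext => _ _ /(_ _ Hli) Hmi.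
  have Hmu : forall i, (i < n.+1)%N -> mu i = 0.
    move=> i Hi; apply: (Hmi mu); last by rewrite size_map size_mkseq.
    rewrite size_map size_mkseq -[RHS]Hr; apply: eq_bigr => i' _.
    by rewrite nth_map_iota nth_mkseq.
  have := Hk (fun i => if i == 0%N then 1 else 0).
  move=> /(_ _ 0%N (ltn0Sn n)) /= H.
  have : (1 : k) = 0.
    apply: H; apply: big1 => i _; by rewrite Hmu ?mulr0.
  by move/eqP; rewrite oner_eq0.
move: Hli; rewrite /lin_indep => /not_all_ex_not [c].
move=> H0; have [Hc H1] := imply_to_and _ _ H0.
have [j H2] := not_all_ex_not _ _ H1.
have [Hj Hcj] := imply_to_and _ _ H2.
move: Hc Hj; rewrite size_mkseq => Hc Hj.
have Hcj' : c j != 0 by apply/eqP.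
set w' := fun i => w (bump j i).
set mu' := fun i => mu (bump j i) - phi (c (bump j i) / c j) * mu j.
have Hwj : w j = - \sum_(i < n) (c (bump j i) / c j) *: w' i.
  move: Hc; rewrite (sum_remove (fun i => c i *: (mkseq w n.+1)`_i) Hj) nth_mkseq // => Hc.
  apply: (scalerI Hcj'); rewrite scalerN scaler_sumr.
  apply/eqP; rewrite -addr_eq0; apply/eqP; rewrite -[RHS]Hc; congr (_ + _).
  apply: eq_bigr => i _; rewrite nth_mkseq ?bump_lt // scalerA mulrCA divff // mulr1 //.
have Hr' : rep n mu' w' = 0.
  rewrite -Hr /rep (sum_remove (fun i => mu i *: iota (w i)) Hj) Hwj.
  rewrite rmorphN rmorph_sum scalerN scaler_sumr /mu' addrC.
  rewrite -sumrN -big_split /=; apply: eq_bigr => i _.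
  by rewrite iotaZ scalerA scalerBl mulrC.
have Hk' : kindep n mu'.
  have Hbn : forall i, (bump j i == j) = false.
    by move=> i; rewrite eq_sym (negbTE (neq_bump j i)).
  move=> d Hd.
  pose D x := if x == j then - \sum_(i < n) d i * (c (bump j i) / c j) else d (unbump j x).
  have HD : \sum_(x < n.+1) phi (D x) * mu x = 0.
    rewrite (sum_remove (fun x => phi (D x) * mu x) Hj) -[RHS]Hd /D eqxx.
    rewrite /mu'; under [X in _ = X]eq_bigr => i _ do rewrite mulrBr.
    rewrite sumrB addrC; congr (_ + _).
      apply: eq_bigr => i _; by rewrite Hbn bumpK.
    rewrite rmorphN rmorph_sum mulNr mulr_suml; congr (- _).
    by apply: eq_bigr => i _; rewrite [phi (d i * _)]rmorphM mulrA.
  move=> i Hi; have := Hk D HD (bump j i) (bump_lt j Hi).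
  by rewrite /D Hbn bumpK.
have Hw' := IH mu' w' Hk' Hr'.
move=> x Hx; case: (eqVneq x j) => [->|Hxj].
  rewrite Hwj big1 ?oppr0 // => i _; by rewrite Hw' ?scaler0.
have := Hw' (unbump j x) (unbump_lt Hx Hxj Hj).
by rewrite /w' unbumpK //= inE.
Qed.


Lemma rep_mul n mu a u v :
  iota u * rep n mu a * iota v = rep n mu (fun i => u * a i * v).
Proof.
rewrite /rep mulr_sumr mulr_suml; apply: eq_bigr => i _.
by rewrite -scalerAr -scalerAl !rmorphM.
Qed.

Lemma rep_sub n mu a b : rep n mu a - rep n mu b = rep n mu (fun i => a i - b i).
Proof.
by rewrite /rep -sumrB; apply: eq_bigr => i _; rewrite rmorphB scalerBr.
Qed.

Lemma red_mu n (mu : nat -> K) (a : nat -> A) (d : nat -> k) j : (j < n.+1)%N -> d j != 0 ->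
  \sum_(i < n.+1) phi (d i) * mu i = 0 ->
  rep n.+1 mu a = rep n (fun i => mu (bump j i))
                        (fun i => a (bump j i) - (d (bump j i) / d j) *: a j).
Proof.
move=> Hj Hdj H.
have Hpj : phi (d j) != 0 by rewrite fmorph_eq0.
have Hmuj : mu j = - \sum_(i < n) mu (bump j i) * phi (d (bump j i) / d j).
  move: H; rewrite (sum_remove (fun i => phi (d i) * mu i) Hj) => H.
  apply: (mulfI Hpj); rewrite mulrN mulr_sumr.
  apply/eqP; rewrite -addr_eq0; apply/eqP; rewrite -[RHS]H; congr (_ + _).
  apply: eq_bigr => i _; rewrite fmorph_div mulrCA mulrA mulrC mulrA.
  by rewrite mulrAC divfK.
rewrite /rep (sum_remove (fun i => mu i *: iota (a i)) Hj) Hmuj.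
rewrite scaleNr scaler_suml -sumrN addrC -big_split /=; apply: eq_bigr => i _.
by rewrite rmorphB iotaZ scalerBr scalerA.
Qed.

Lemma ideal_add (F : fieldType) (C : algType F) (I : C -> Prop) x y :
  two_sided_ideal I -> I x -> I y -> I (x + y).
Proof.
case=> H0 Hsb _ _ Hx Hy; rewrite -[y]opprK -[- y]add0r; apply: (Hsb) => //.
exact: Hsb.
Qed.

Lemma idealB_scale (I : B -> Prop) c x : two_sided_ideal I -> I x -> I (c *: x).
Proof. by case=> _ _ HL _ Hx; rewrite -mulr_algl; apply: HL. Qed.


Lemma key (I : B -> Prop) (HI : two_sided_ideal I)
  (Hcen : forall a0 a1 : A, a0 != 0 ->
     (forall u1 v1 u2 v2, u1 * a0 * v1 = u2 * a0 * v2 -> u1 * a1 * v1 = u2 * a1 * v2) ->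
     exists l : k, a1 = l *: a0) :
  forall n mu a, rep n mu a != 0 -> I (rep n mu a) -> exists a0 : A, a0 != 0 /\ I (iota a0).
Proof.
elim/ltn_ind => n IH mu a Hx HIx.
case: n IH mu a Hx HIx => [|[|m]] IH mu a Hx HIx.
- by move: Hx; rewrite /rep big_ord0 eqxx.
- move: Hx HIx; rewrite /rep big_ord1 => Hx HIx.
  have Hmu : mu 0%N != 0 by apply: contraNneq Hx => ->; rewrite scale0r.
  have Ha : a 0%N != 0 by apply: contraNneq Hx => ->; rewrite rmorph0 scaler0.
  exists (a 0%N); split => //.
  by rewrite -[iota _]scale1r -(mulVf Hmu) -scalerA; apply: idealB_scale.
have IHm : forall mu a, rep m.+1 mu a != 0 -> I (rep m.+1 mu a) ->
    exists a0 : A, a0 != 0 /\ I (iota a0) by apply: IH.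
set x := rep m.+2 mu a in Hx HIx.
have [Ha0|Ha0] := eqVneq (a 0%N) 0.
  have Hxe : x = rep m.+1 (fun i => mu i.+1) (fun i => a i.+1).
    by rewrite /x /rep big_ord_recl Ha0 rmorph0 scaler0 add0r.
  by rewrite Hxe in Hx HIx; apply: IHm Hx HIx.
case: (classic (kindep m.+1 (fun i => mu i.+1))) => Hk; last first.
  move: Hk; rewrite /kindep => /not_all_ex_not [d H0].
  have [Hd H1] := imply_to_and _ _ H0.
  have [j H2] := not_all_ex_not _ _ H1.
  have [Hj Hdj] := imply_to_and _ _ H2.
  pose d' x := if x is y.+1 then d y else 0.
  have Hd' : \sum_(i < m.+2) phi (d' i) * mu i = 0.
    by rewrite big_ord_recl /= rmorph0 mul0r add0r.
  have Hxe := @red_mu m.+1 mu a d' j.+1 Hj (introN eqP Hdj) Hd'.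
  by rewrite /x Hxe in Hx HIx; apply: IHm Hx HIx.
case: (classic (forall u1 v1 u2 v2, u1 * a 0%N * v1 = u2 * a 0%N * v2 ->
    u1 * a 1%N * v1 = u2 * a 1%N * v2)) => Hc; last first.
  move: Hc => /not_all_ex_not [u1 /not_all_ex_not [v1 /not_all_ex_not [u2 H0]]].
  have [v2 H1] := not_all_ex_not _ _ H0.
  have [Heq Hne] := imply_to_and _ _ H1.
  set y := iota u1 * x * iota v1 - iota u2 * x * iota v2.
  have HIy : I y.
    case: HI => _ Hsb HL HR; apply: Hsb; apply: HR; apply: HL => //.
  have Hye : y = rep m.+1 (fun i => mu i.+1)
      (fun i => u1 * a i.+1 * v1 - u2 * a i.+1 * v2).
    rewrite /y /x !rep_mul rep_sub /rep big_ord_recl Heq subrr rmorph0 scaler0 add0r.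
    by [].
  have [Hy0|Hy0] := eqVneq y 0.
    exfalso; apply: Hne.
    have := L_indep Hk (esym (etrans (esym Hy0) Hye)) (ltn0Sn m).
    by move/eqP; rewrite subr_eq0 => /eqP.
  by rewrite Hye in Hy0 HIy; apply: IHm Hy0 HIy.
have [l Hl] := Hcen _ _ Ha0 Hc.
have Hxe : x = rep m.+1 (fun i => if i is i'.+1 then mu i'.+2 else mu 0%N + phi l * mu 1%N)
                        (fun i => if i is i'.+1 then a i'.+2 else a 0%N).
  rewrite /x /rep big_ord_recl big_ord_recl [in RHS]big_ord_recl /= addrA; congr (_ + _).
  by rewrite Hl iotaZ scalerA scalerDl mulrC.
by rewrite Hxe in Hx HIx; apply: IHm Hx HIx.
Qed.

End Ext.


Lemma cyclic_simple (k : fieldType) (A : algType k) (M : lmodType A) :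
  simple_module M -> forall v : M, v != 0 -> forall m, exists r : A, m = r *: v.
Proof.
case=> _ Hsimp v Hv m.
have Hsub : submodule (fun m => exists r : A, m = r *: v).
  split.
  - by exists 0; rewrite scale0r.
  - by move=> _ _ [a ->] [b ->]; exists (a - b); rewrite scalerBl.
  - by move=> a _ [b ->]; exists (a * b); rewrite scalerA.
case: (Hsimp _ Hsub) => [Hz|]; last by apply.
by exfalso; move/eqP: Hv; apply; apply: Hz; exists 1; rewrite scale1r.
Qed.

Lemma centroid (k : closedFieldType) (A : algType k) :
  primitive_algebra A -> nullstellensatz A ->
  forall a0 a1 : A, a0 != 0 ->
     (forall u1 v1 u2 v2, u1 * a0 * v1 = u2 * a0 * v2 -> u1 * a1 * v1 = u2 * a1 * v2) ->
     exists l : k, a1 = l *: a0.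
Proof.
move=> [M [Hs Hf]] [_ Hn] a0 a1 Ha0 Hc.
have [m0 Hm0] : exists m0 : M, a0 *: m0 != 0.
  apply: NNPP => Hne; move/eqP: Ha0; apply; apply: Hf => m.
  by apply: NNPP => H; apply: Hne; exists m; apply/eqP.
set n0 := a0 *: m0 in Hm0.
have cyc := cyclic_simple Hs Hm0.
have W : forall d, d *: n0 = 0 -> (d * a1) *: m0 = 0.
  move=> d Hd; apply: NNPP => Hv.
  have [w Hw] := cyclic_simple Hs (introN eqP Hv) m0.
  have := Hc (a0 * w * d) 1 1 (w * d * a0).
  rewrite !mulr1 !mul1r !mulrA => /(_ erefl) H.
  move/eqP: Hm0; apply.
  rewrite /n0 {1}Hw !scalerA !mulrA H -scalerA -/n0 -scalerA Hd.
  by rewrite !scaler0.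
pose R m := proj1_sig (constructive_indefinite_description _ (cyc m)).
have HR m : m = R m *: n0 := proj2_sig (constructive_indefinite_description _ (cyc m)).
pose f m := (R m * a1) *: m0.
have fprop : forall r m, m = r *: n0 -> f m = (r * a1) *: m0.
  move=> r m Hm; apply/eqP; rewrite -subr_eq0 -scalerBl -mulrBl; apply/eqP; apply: W.
  by rewrite scalerBl; apply/eqP; rewrite subr_eq0 -Hm; apply/eqP; symmetry; apply: HR.
have He : module_endo f.
  split.
  - move=> m n; rewrite (fprop (R m + R n)); first by rewrite mulrDl scalerDl.
    by rewrite scalerDl -!HR.
  - move=> b m; rewrite (fprop (b * R m)); first by rewrite /f scalerA mulrA.
    by rewrite -scalerA; congr (b *: _); apply: HR.
have [l Hl] := endo_scalar Hs He (Hn M Hs f He).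
exists l; apply/eqP; rewrite -subr_eq0; apply/eqP; apply: Hf => m.
have [r ->] := cyc m.
have := Hc 1 (r * a0) (a0 * r) 1.
rewrite !mulr1 !mul1r !mulrA => /(_ erefl) H.
rewrite scalerBl /n0 !scalerA H -(mulrA a0) -scalerA -scalerA.
rewrite -scalerA -(fprop r (r *: n0)) // Hl.
by rewrite [X in X - _]scalerA mulr_algr subrr.

Qed.


Lemma indep_exists (k : fieldType) (A : algType k) : infinite_dim A ->
  forall n, exists t : seq A, size t = n /\ lin_indep t.
Proof.
move=> Hinf; elim=> [|n [t [Ht Hli]]].
  by exists [::]; split => // c _ i.
have [a Ha] : exists a, ~ in_span t a.
  apply: not_all_ex_not => H; apply: Hinf; by exists t.
exists (a :: t); split; first by rewrite /= Ht.
move=> c; rewrite /= big_ord_recl /= => Hc.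
have Hc0 : c 0%N = 0.
  apply: NNPP => Hc0; apply: Ha.
  exists (fun i => - c i.+1 / c 0%N).
  have Hc0' : c 0%N != 0 by apply/eqP.
  apply: (scalerI Hc0'); rewrite scaler_sumr.
  have -> : c 0%N *: a = - \sum_(i < size t) c i.+1 *: t`_i.
    by apply/eqP; rewrite -addr_eq0 Hc.
  rewrite -sumrN; apply: eq_bigr => i _.
  by rewrite scalerA mulrCA divff // mulr1 scaleNr.
move: Hc; rewrite Hc0 scale0r add0r => Hc.
have Hs := Hli (fun i => c i.+1) Hc.
by case=> [|i] Hi //; apply: Hs.
Qed.

Section Fin.
Variables (k K : fieldType) (phi : {rmorphism k -> K}) (A : algType k) (B : algType K)
  (iota : {rmorphism A -> B}).
Hypothesis Hext : scalar_extension phi iota.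

Lemma codim_transfer (I : B -> Prop) a : two_sided_ideal I -> a != 0 -> I (iota a) ->
  just_infinite A -> finite_codim I.
Proof.
move=> HI Ha HIa [_ Hji].
have HJ : two_sided_ideal (fun x => I (iota x)).
  case: HI => H0 Hsb HL HR; split.
  - by rewrite rmorph0.
  - by move=> x y Hx Hy; rewrite rmorphB; apply: Hsb.
  - by move=> u x Hx; rewrite rmorphM; apply: HL.
  - by move=> u x Hx; rewrite rmorphM; apply: HR.
have [s Hs] := Hji _ HJ (ex_intro _ a (conj HIa Ha)).
exists (map iota s).
pose Good (b : B) := exists cB : nat -> K,
  I (b - \sum_(i < size s) cB i *: iota s`_i).
suff HG : forall b, Good b.
  move=> b; have [cB HcB] := HG b; exists cB.
  rewrite size_map; under eq_bigr => i _ do rewrite nth_map_iota; exact: HcB.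
have G0 : Good 0.
  exists (fun _ => 0); rewrite big1 ?subrr; first by case: HI.
  by move=> i _; rewrite scale0r.
have GD : forall x y, Good x -> Good y -> Good (x + y).
  move=> x y [c1 H1] [c2 H2]; exists (fun i => c1 i + c2 i).
  have -> : x + y - \sum_(i < size s) (c1 i + c2 i) *: iota s`_i =
     (x - \sum_(i < size s) c1 i *: iota s`_i) + (y - \sum_(i < size s) c2 i *: iota s`_i).
    rewrite addrACA -opprD -big_split /=; congr (_ - _); apply: eq_bigr => i _.
    by rewrite scalerDl.
  exact: ideal_add.
have GZ : forall mu x, Good x -> Good (mu *: x).
  move=> mu x [c1 H1]; exists (fun i => mu * c1 i).
  have -> : mu *: x - \sum_(i < size s) (mu * c1 i) *: iota s`_i =
     mu *: (x - \sum_(i < size s) c1 i *: iota s`_i).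
    rewrite scalerBr scaler_sumr; congr (_ - _); apply: eq_bigr => i _.
    by rewrite scalerA.
  exact: idealB_scale.
have Gi : forall x, Good (iota x).
  move=> x; have [c Hc] := Hs x; exists (fun i => phi (c i)).
  move: Hc; rewrite rmorphB rmorph_sum.
  by under eq_bigr => i _ do rewrite (iotaZ Hext).
move=> b; case: Hext => _ /(_ b) [t [e ->]] _.
apply: (big_ind Good G0 GD) => i _.
by apply: GZ; rewrite nth_map_iota.
Qed.

Lemma infdim_transfer : infinite_dim A -> infinite_dim B.
Proof.
move=> HA [s Hs].
have [t [Ht Hli]] := indep_exists HA (size s).+1.
have Hmi : lin_indep (map iota t) by case: Hext => _ _; apply.
have Hc : forall j : 'I_(size t), exists c : nat -> K,
    iota t`_j = \sum_(i < size s) c i *: s`_i.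
  by move=> j; have [c Hc] := Hs (iota t`_j); exists c.
have [C HC] := fin_all_exists Hc.
pose Cm : 'M[K]_(size t, size s) := \matrix_(j, i) C j i.
have Hker : kermx Cm != 0.
  apply/eqP => H0; move: (mxrank_ker Cm); rewrite H0 mxrank0 => /esym/eqP.
  rewrite subn_eq0 => Hle.
  have := leq_trans Hle (rank_leq_col Cm); by rewrite Ht ltnn.
have [r Hr] : exists r, row r (kermx Cm) != 0.
  apply: NNPP => Hn; move/eqP: Hker; apply; apply/row_matrixP => r.
  rewrite row0; apply/eqP; apply: NNPP => H; apply: Hn; exists r; exact/negP.
set v := row r (kermx Cm) in Hr.
have Hv : v *m Cm = 0 by rewrite /v -row_mul mulmx_ker row0.
have Hz : forall j, (j < size t)%N -> v 0 (insubd r j) = 0.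
  move=> j0 Hj0; apply: (Hmi (fun j => v 0 (insubd r j))); last by rewrite size_map.
  rewrite size_map.
  under eq_bigr => j _ do rewrite nth_map_iota valKd HC scaler_sumr.
  rewrite exchange_big /= big1 // => i _.
  under eq_bigr => j _ do rewrite scalerA.
  rewrite -scaler_suml.
  have := congr1 (fun M : 'M[K]_(1, size s) => M 0 i) Hv; rewrite !mxE => Hsum.
  have Hsum' : \sum_(j < size t) v 0 j * C j i = 0.
    by rewrite -[RHS]Hsum; apply: eq_bigr => j _; rewrite /Cm !mxE.
  by rewrite Hsum' scale0r.
move/eqP: Hr; apply; apply/rowP => j; rewrite mxE.
by have := Hz j (ltn_ord j); rewrite valKd !mxE.
Qed.

End Fin.


Theorem proposition4p3 (k : closedFieldType) (A : algType k) :
  primitive_algebra A -> just_infinite A -> ~ PI_algebra A ->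
  nullstellensatz A -> stably_just_infinite A.
Proof.
move=> Hprim Hji _ Hnull; split => // K phi B iota Hext.
split; first exact: (infdim_transfer Hext) Hji.1.
move=> I HI [x [HIx Hx0]].
have Hext' := Hext.
case: Hext' => _ /(_ x) [t [e Hxe]] _.
have Hxr : x = rep iota (size t) e (fun i => t`_i).
  rewrite Hxe /rep size_map; apply: eq_bigr => i _; by rewrite nth_map_iota.
rewrite Hxr in HIx Hx0.
have [a [Ha HIa]] := key Hext HI (@centroid k A Hprim Hnull) Hx0 HIx.
exact: (codim_transfer Hext HI Ha HIa Hji).
Qed.
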